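(* Let $x\in\mathbb{R}^n$, $a\in\mathbb{R}$, $b\in\mathbb{R}^n$, and let $C\in\mathbb{R}^{n\times n}$ be symmetric and nonsingular, and let $f(y)=a+b^\top(y-x)+\tfrac12 (y-x)^\top C(y-x)$. Let $y^1,\dots,y^p\in\mathbb{R}^n$, set $z^\ell=\nabla^2 f(x)(y^\ell-x)=C(y^\ell-x)$, $\ell=1,\dots,p$, and let $d^{prev}\in\mathbb{R}^n$. Consider the linear conditions on $d\in\mathbb{R}^n$: $$(z^\ell)^\top d=-f(y^\ell)+f(x)+\tfrac12 (y^\ell-x)^\top z^\ell,\qquad \ell=1,\dots,p,$$ and assume this system is feasible and underdetermined in $d$. Let $d^*$ be the optimal solution of $\min_d \tfrac12\|d-d^{prev}\|^2$ subject to these conditions. Then $$\|d^*-(-C^{-1}b)\|^2\le\|d^{prev}-(-C^{-1}b)\|^2.$$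
   Context: $\|\cdot\|$ is the Euclidean norm. *)

(* Defs.v *)
From HB Require Import structures.
From mathcomp Require Import all_boot all_order all_algebra.
Set Implicit Arguments. Unset Strict Implicit. Unset Printing Implicit Defensive.
Import Order.TTheory GRing.Theory Num.Theory.
Local Open Scope ring_scope.

Definition dotv (R : ringType) (n : nat) (u v : 'cV[R]_n) : R :=
  \sum_(i < n) u i 0 * v i 0.

Definition sqnorm (R : ringType) (n : nat) (v : 'cV[R]_n) : R := dotv v v.

Definition quadf (R : fieldType) (n : nat) (x : 'cV[R]_n) (a : R)
  (b : 'cV[R]_n) (C : 'M[R]_n) (y : 'cV[R]_n) : R :=
  a + dotv b (y - x) + 2^-1 * dotv (y - x) (C *m (y - x)).

Definition lin_cond (R : fieldType) (n p : nat) (x : 'cV[R]_n) (a : R)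
  (b : 'cV[R]_n) (C : 'M[R]_n) (Y : 'I_p -> 'cV[R]_n) (d : 'cV[R]_n) : Prop :=
  forall l : 'I_p,
    dotv (C *m (Y l - x)) d =
      - quadf x a b C (Y l) + quadf x a b C x
      + 2^-1 * dotv (Y l - x) (C *m (Y l - x)).

(* Main.v *)
Require Import Defs.
From HB Require Import structures.
From mathcomp Require Import all_boot all_order all_algebra.
From mathcomp Require Import ring lra.
Import Order.TTheory GRing.Theory Num.Theory.
Local Open Scope ring_scope.

Section Dot.
Context {R : comNzRingType}.
Context {n : nat}.
Implicit Types u v w : 'cV[R]_n.

Lemma dotvC u v : dotv u v = dotv v u.
Proof. by apply: eq_bigr => i _; rewrite mulrC. Qed.

Lemma dotvDr u v w : dotv u (v + w) = dotv u v + dotv u w.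
Proof. by rewrite /dotv -big_split; apply: eq_bigr => i _; rewrite mxE mulrDr. Qed.

Lemma dotvZr u v k : dotv u (k *: v) = k * dotv u v.
Proof. by rewrite /dotv mulr_sumr; apply: eq_bigr => i _; rewrite mxE mulrCA. Qed.

Lemma dotvNr u v : dotv u (- v) = - dotv u v.
Proof. by rewrite -scaleN1r dotvZr mulN1r. Qed.

Lemma dotvBr u v w : dotv u (v - w) = dotv u v - dotv u w.
Proof. by rewrite dotvDr dotvNr. Qed.

Lemma dotvDl u v w : dotv (v + w) u = dotv v u + dotv w u.
Proof. by rewrite !(dotvC _ u) dotvDr. Qed.

Lemma dotvZl u v k : dotv (k *: v) u = k * dotv v u.
Proof. by rewrite !(dotvC _ u) dotvZr. Qed.

Lemma sqnormDZ u w t : sqnorm (u + t *: w)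
   = sqnorm u + 2 * t * dotv u w + t ^+ 2 * sqnorm w.
Proof. rewrite /sqnorm dotvDr !dotvDl !dotvZr !dotvZl (dotvC w u); ring. Qed.

Lemma sqnormN v : sqnorm (- v) = sqnorm v.
Proof. by rewrite /sqnorm dotvNr (dotvC (- v)) dotvNr opprK. Qed.

Lemma sqnormD u w : sqnorm (u + w) = sqnorm u + 2 * dotv u w + sqnorm w.
Proof. by have := sqnormDZ u w 1; rewrite scale1r expr1n !mulr1 mul1r. Qed.

Lemma dotv0r u : dotv u 0 = 0.
Proof. by rewrite /dotv big1 // => i _; rewrite mxE mulr0. Qed.

Lemma dotv_mx u v : dotv u v = (u^T *m v) 0 0.
Proof. by rewrite mxE; apply: eq_bigr => i _; rewrite mxE. Qed.

Lemma dotv_mul (C : 'M[R]_n) u v : dotv (C *m u) v = dotv u (C^T *m v).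
Proof. by rewrite !dotv_mx trmx_mul mulmxA. Qed.
End Dot.

Theorem theorem3 (R : realFieldType) (n p : nat) (x : 'cV[R]_n) (a : R)
  (b : 'cV[R]_n) (C : 'M[R]_n) (Y : 'I_p -> 'cV[R]_n) (dprev dstar : 'cV[R]_n) :
  C^T = C ->
  C \in unitmx ->
  (exists d, lin_cond x a b C Y d) ->
  (p < n)%N ->
  lin_cond x a b C Y dstar ->
  (forall d, lin_cond x a b C Y d ->
     2^-1 * sqnorm (dstar - dprev) <= 2^-1 * sqnorm (d - dprev)) ->
  sqnorm (dstar - (- (invmx C *m b))) <= sqnorm (dprev - (- (invmx C *m b))).
Proof.
move=> CT Cu _ _ Hs Hopt.
set d0 := - (invmx C *m b).
have H0 : lin_cond x a b C Y d0.
  move=> l; rewrite dotv_mul CT /d0 mulmxN mulmxA mulmxV // mul1mx dotvNr.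
  rewrite /quadf subrr dotv0r mulmx0 dotv0r mulr0 !addr0 dotvC; ring.
have Hlin : forall t, lin_cond x a b C Y (dstar + t *: (d0 - dstar)).
  move=> t l; rewrite dotvDr dotvZr dotvBr Hs H0; ring.
set u := dstar - dprev; set w := d0 - dstar.
have E : forall t, sqnorm (dstar + t *: w - dprev)
   = sqnorm u + 2 * t * dotv u w + t ^+ 2 * sqnorm w.
  move=> t; have -> : dstar + t *: w - dprev = u + t *: w.
    by rewrite /u addrAC.
  exact: sqnormDZ.
have Ht : forall t, 0 <= 2 * t * dotv u w + t ^+ 2 * sqnorm w.
  move=> t; have := Hopt _ (Hlin t); rewrite E ler_pM2l ?invr_gt0 ?ltr0n //.
  by rewrite -addrA lerDl.
have q0 : 0 <= sqnorm w.
  by rewrite /sqnorm /dotv sumr_ge0 // => i _; rewrite -expr2 sqr_ge0.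
have c0 : 0 <= dotv u w.
  rewrite leNgt; apply/negP => cn.
  set c := dotv u w in cn Ht; set q := sqnorm w in q0 Ht.
  have q1 : 0 < q + 1 by rewrite ltr_wpDl.
  have := Ht (- c / (q + 1)).
  have -> : 2 * (- c / (q + 1)) * c + (- c / (q + 1)) ^+ 2 * q
     = (- c / (q + 1)) * (c * (2 - q / (q + 1))).
    by field; rewrite gt_eqF.
  have h2 : 0 < 2 - q / (q + 1).
    have : q / (q + 1) <= 1 by rewrite ler_pdivrMr // mul1r lerDl.
    lra.
  by rewrite pmulr_rge0 ?divr_gt0 ?oppr_gt0 // pmulr_lge0 // leNgt cn.
have -> : dstar - d0 = - w by rewrite opprB.
have -> : dprev - d0 = - (u + w) by rewrite /u /w opprD !opprB addrA subrK.
clearbody u w.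
rewrite !sqnormN sqnormD.
have : 0 <= dotv u u by rewrite /dotv sumr_ge0 // => i _; rewrite -expr2 sqr_ge0.
rewrite /sqnorm in q0 *; lra.
Qed.
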